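(* Let $N\ge1$, $k\in\{1,\dots,N\}$, $\mathcal{I}_k:=\big((N-2k)\frac{\pi}{2},(N-2(k-1))\frac{\pi}{2}\big)$, and $G(A):=\sum_{i=1}^N\arctan(\lambda_i(A))$ for $A\in\mathcal{S}(N)$. For every compact set $\Sigma\subset\mathcal{I}_k$ there exists $C=C(\Sigma)>0$ such that every $A\in\mathcal{S}(N)$ with $G(A)\in\Sigma$ satisfies $|\lambda_j(A)|\le C$ for some $j=j_A\in\{1,\dots,N\}$.
   Context: $\mathcal{S}(N)$ is the space of real symmetric $N\times N$ matrices and $\lambda_1(A)\le\dots\le\lambda_N(A)$ are the eigenvalues of $A$. *)

(* Defs.v *)
From HB Require Import structures.
From mathcomp Require Import all_boot all_order all_algebra.
From mathcomp Require Import all_classical all_reals all_analysis.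
Set Implicit Arguments. Unset Strict Implicit. Unset Printing Implicit Defensive.
Import Order.TTheory GRing.Theory Num.Theory.
Local Open Scope ring_scope.

Definition is_eigen_seq (R : realType) (N : nat) (A : 'M[R]_N) (s : seq R) :=
  [/\ size s = N, sorted <=%R s & char_poly A = \prod_(x <- s) ('X - x%:P)].

(* The (sorted) eigenvalue list of A; for real symmetric A it exists by the
   spectral theorem, the default [nseq N 0] is never used for such A. *)
Definition eigvals (R : realType) (N : nat) (A : 'M[R]_N) : seq R :=
  match pselect (exists s, is_eigen_seq A s) with
  | left h => projT1 (cid h)
  | right _ => nseq N 0
  end.

(* lambda_{i+1}(A) for i : 'I_N (0-based index). *)
Definition eigval (R : realType) (N : nat) (A : 'M[R]_N) (i : 'I_N) : R :=
  nth 0 (eigvals A) i.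

Definition Gfun (R : realType) (N : nat) (A : 'M[R]_N) : R :=
  \sum_(i < N) atan (eigval A i).

Definition Ik (R : realType) (N k : nat) : set R :=
  `](N%:R - 2 * k%:R) * (pi / 2), (N%:R - 2 * (k%:R - 1)) * (pi / 2)[%classic.

(* Main.v *)
Require Import Defs.
From HB Require Import structures.
From mathcomp Require Import all_boot all_order all_algebra.
From mathcomp Require Import all_classical all_reals all_analysis.
From mathcomp Require Import lra.
Import Order.TTheory GRing.Theory Num.Theory.
Local Open Scope ring_scope.
Local Open Scope classical_set_scope.
Import numFieldNormedType.Exports.

Theorem lemma6p19 (R : realType) (N k : nat) (Sigma : set R) :
  (1 <= N)%N -> (1 <= k <= N)%N ->
  @compact (Num.NumDomain.sort R) Sigma -> Sigma `<=` @Ik R N k ->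
  exists C : R, 0 < C /\
    forall A : 'M[R]_N, A^T = A -> Sigma (Gfun A) ->
      exists j : 'I_N, `|eigval A j| <= C.
Proof.
move=> N1 /andP[k1 kN] cS sSI.
have [Sne|S0] := pselect (Sigma !=set0); last first.
  exists 1; split => // A _ SA; exfalso; apply: S0; by exists (Gfun A).
set a : R := (N%:R - 2 * k%:R) * (pi / 2).
set b : R := (N%:R - 2 * (k%:R - 1)) * (pi / 2).
have inI x : Sigma x -> a < x < b.
  by move=> /sSI; rewrite /Ik /= in_itv /=.
have cid' : {within Sigma, continuous (fun x : R => x)}.
  by apply: continuous_subspaceT => x; exact: cvg_id.
have [m /set_mem Sm mmin] := compact_EVT_min Sne cS cid'.
have [M /set_mem SM Mmax] := compact_EVT_max Sne cS cid'.
set d := Num.min (m - a) (b - M).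
have d0 : 0 < d.
  have /andP[am _] := inI _ Sm; have /andP[_ Mb] := inI _ SM.
  by rewrite lt_min !subr_gt0 am Mb.
have d1 : d <= m - a by rewrite /d ge_min lexx.
have d2 : d <= b - M by rewrite /d ge_min lexx orbT.
have dS x : Sigma x -> a + d <= x <= b - d.
  move=> Sx; have /mmin xm := mem_set Sx; have /Mmax xM := mem_set Sx.
  apply/andP; split; simpl in *; lra.
set pi2 := pi / 2 : R.
have pi20 : 0 < pi2 by rewrite divr_gt0 // pi_gt0.
have N0 : 0 < N%:R :> R by rewrite ltr0n.
set mn := Num.min (d / N%:R) pi2.
have mn1 : mn <= d / N%:R by rewrite /mn ge_min lexx.
have mn2 : mn <= pi2 by rewrite /mn ge_min lexx orbT.
have mn0 : 0 < mn by rewrite lt_min divr_gt0 // pi20.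
set e := mn / 2.
have e0 : 0 < e by rewrite divr_gt0.
have ele : e < pi2 by rewrite /e; lra.
have Ne : N%:R * e < d.
  have h : N%:R * mn <= d.
    by rewrite (le_trans (ler_wpM2l (ltW N0) mn1)) // mulrC divfK ?gt_eqF.
  rewrite /e mulrA; lra.
set t := pi2 - e.
have tI : t \in `](- pi2), pi2[%R.
  rewrite in_itv /= /t ltrBlDr ltrDl e0 andbT.
  by rewrite ltrBrDl -ltrBrDr opprK (lt_le_trans ele) // lerDr ltW.
set C := Num.max 1 (tan t).
exists C; split; first by rewrite lt_max ltr01.
move=> A _ SG.
apply: contrapT => /forallNP hall.
have big i : C < `|eigval A i|.
  by rewrite ltNge; apply/negP => h; exact: hall i h.
have ht : atan (tan t) = t := tanK tI.
have tC : tan t <= C by rewrite /C le_max lexx orbT.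
pose P i := eigval A i < 0.
pose s i : R := 1 - 2 * (P i)%:R.
have term i : s i * pi2 - e <= atan (eigval A i) <= s i * pi2 + e.
  have := big i; rewrite /s /P.
  have h1 : atan (eigval A i) < pi2 := atan_ltpi2 _.
  have h2 : - pi2 < atan (eigval A i) := atan_gtNpi2 _.
  case: (ltP (eigval A i) 0) => [lneg|lpos] /= h3.
    rewrite ltr0_norm // in h3.
    have h4 : eigval A i < - tan t by lra.
    have := lt_atan h4; rewrite atanN ht => h5.
    rewrite /t in h5; apply/andP; split; lra.
  rewrite ger0_norm // in h3.
  have h4 : tan t < eigval A i by lra.
  have := lt_atan h4; rewrite ht => h5.
  rewrite /t in h5; apply/andP; split; lra.
pose mm := (\sum_(i < N) (P i : nat))%N.
have sums : \sum_(i < N) s i = N%:R - 2 * mm%:R.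
  by rewrite /s sumrB sumr_const card_ord -mulr_sumr /mm natr_sum.
have sc : \sum_(i < N) e = N%:R * e by rewrite sumr_const card_ord mulr_natl.
have lo : (N%:R - 2 * mm%:R) * pi2 - N%:R * e <= Gfun A.
  rewrite /Gfun -sums mulr_suml -sc -sumrB.
  by apply: ler_sum => i _; have /andP[] := term i.
have hi : Gfun A <= (N%:R - 2 * mm%:R) * pi2 + N%:R * e.
  rewrite /Gfun -sums mulr_suml -sc -big_split.
  by apply: ler_sum => i _; have /andP[] := term i.
have /andP[g1 g2] := dS _ SG.
case: (leqP k mm) => km.
  have : (N%:R - 2 * mm%:R) * pi2 <= a.
    by rewrite /a ler_wpM2r ?(ltW pi20) // lerD2l lerN2 ler_wpM2l // ler_nat.
  lra.
have : b <= (N%:R - 2 * mm%:R) * pi2.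
  rewrite /b ler_wpM2r ?(ltW pi20) //.
  have : (mm + 1)%:R <= k%:R :> R by rewrite ler_nat addn1.
  rewrite natrD; lra.
lra.
Qed.
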